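(* Let $P$ be a probability distribution on a finite alphabet $\mathcal A=\{a_1,a_2,\dots,a_{|\mathcal A|}\}$ (with $a_1\neq a_2$), and suppose that for some integer $s\ge1$ and some constant $\delta_0\in(0,1)$, $$\frac{3}{s\delta_0}<\min\{P(a_1),P(a_2)\}.$$ Let $\hat P$ be an empirical type over $\mathcal A^s$ such that $\min\Big\{\frac{\hat P(a_1)}{P(a_1)},\frac{P(a_2)}{\hat P(a_2)}\Big\}\ge\delta_0$ and $\hat P(a_2)\ge 1/s$. Define $\bar P$ by $\bar P(a_1)=\hat P(a_1)-\frac3s$, $\bar P(a_2)=\hat P(a_2)+\frac3s$, and $\bar P(a_i)=\hat P(a_i)$ for all $a_i\in\mathcal A\setminus\{a_1,a_2\}$. Then $$P^s(T(\bar P))\ge\delta\,P^s(T(\hat P))$$ for some strictly positive constant $\delta=\delta(\delta_0)$ depending only on $\delta_0$.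
   Context: An empirical type over $\mathcal A^s$ is a distribution $\hat P$ on $\mathcal A$ such that $\hat P(a)$ is an integer multiple of $1/s$ for every $a\in\mathcal A$. $P^s$ denotes the product distribution induced by $P$ on $\mathcal A^s$, and $T(\hat P)$ (resp. $T(\bar P)$) denotes the set of sequences in $\mathcal A^s$ whose empirical distribution equals $\hat P$ (resp. $\bar P$). *)

(* Defs.v *)
From mathcomp Require Import all_boot all_order all_algebra.
From mathcomp Require Import reals.
Set Implicit Arguments. Unset Strict Implicit. Unset Printing Implicit Defensive.
Import Order.TTheory GRing.Theory Num.Theory.
Local Open Scope ring_scope.

Section Types.
Variables (R : realType) (A : finType).

Definition is_distr (P : A -> R) : Prop :=
  (forall a, 0 <= P a) /\ \sum_(a : A) P a = 1.

Definition empirical_type (s : nat) (Q : A -> R) : Prop :=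
  is_distr Q /\ forall a, exists k : nat, Q a = k%:R / s%:R.

Definition emp_dist (s : nat) (x : s.-tuple A) (a : A) : R :=
  (count_mem a x)%:R / s%:R.

Definition type_class (s : nat) (Q : A -> R) : {set s.-tuple A} :=
  [set x : s.-tuple A | [forall a, emp_dist x a == Q a]].

Definition prodP (s : nat) (P : A -> R) (E : {set s.-tuple A}) : R :=
  \sum_(x in E) \prod_(i < s) P (tnth x i).

Definition shift_type (s : nat) (a1 a2 : A) (Q : A -> R) (a : A) : R :=
  if a == a1 then Q a1 - 3%:R / s%:R
  else if a == a2 then Q a2 + 3%:R / s%:R
  else Q a.

End Types.

(* Main.v *)
Require Import Defs.
From mathcomp Require Import all_boot all_order all_algebra.
From mathcomp Require Import reals.
From mathcomp Require Import ring lra.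
Import Order.TTheory GRing.Theory Num.Theory.
Local Open Scope ring_scope.

Section S.
Variables (R : realType) (A : finType) (s : nat) (a1 a2 : A) (P : A -> R).
Hypothesis a12 : a1 != a2.
Hypothesis s0 : (0 < s)%N.

Definition wt (x : s.-tuple A) := \prod_(i < s) P (tnth x i).
Definition cntR (x : s.-tuple A) (a : A) : R := \sum_(j < s) ((tnth x j == a)%:R).
Definition sw (a : A) := if a == a1 then a2 else if a == a2 then a1 else a.
Definition fl (i : 'I_s) (x : s.-tuple A) : s.-tuple A :=
  [tuple (if j == i then sw (tnth x j) else tnth x j) | j < s].

Lemma tnth_fl i x j : tnth (fl i x) j = if j == i then sw (tnth x j) else tnth x j.
Proof. by rewrite tnth_mktuple. Qed.

Lemma sw_inv a : sw (sw a) = a.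
Proof.
have h := a12; rewrite /sw; do ! case: eqP => //=.
all: try (move=> *; subst; by rewrite eqxx in h).
Qed.

Lemma sw_a1 b : (sw b == a1) = (b == a2).
Proof.
have h := a12; rewrite /sw; do ! case: eqP => //=.
all: try (move=> *; subst; by rewrite eqxx in h).
Qed.

Lemma fl_inv i : cancel (fl i) (fl i).
Proof.
move=> x; apply: eq_from_tnth => j; rewrite !tnth_fl.
by case: (j == i) => //; rewrite sw_inv.
Qed.

Lemma countE (x : s.-tuple A) a : (count_mem a x)%:R = cntR x a.
Proof.
rewrite -sum1_count big_tuple /cntR.
rewrite big_mkcond /=.
by rewrite -natr_sum.
Qed.

Lemma cnt_fl i y a : tnth y i = a2 ->
  cntR (fl i y) a + (a == a2)%:R = cntR y a + (a == a1)%:R.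
Proof.
move=> hy; rewrite /cntR (bigD1 i) //= [in RHS](bigD1 i) //= tnth_fl eqxx hy.
have -> : sw a2 = a1 by rewrite /sw eq_sym (negbTE a12) eqxx.
rewrite (eq_bigr (fun j => (tnth y j == a)%:R)); last first.
  by move=> j /negbTE hj; rewrite tnth_fl hj.
rewrite [a1 == a]eq_sym [a2 == a]eq_sym; ring.
Qed.

Lemma wt_fl i y : tnth y i = a2 -> wt (fl i y) * P a2 = wt y * P a1.
Proof.
move=> hy; rewrite /wt (bigD1 i) //= [in RHS](bigD1 i) //= tnth_fl eqxx hy.
have -> : sw a2 = a1 by rewrite /sw eq_sym (negbTE a12) eqxx.
rewrite (eq_bigr (fun j => P (tnth y j))); last first.
  by move=> j /negbTE hj; rewrite tnth_fl hj.
ring.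
Qed.

Definition shift1 (Q : A -> R) (a : A) : R :=
  Q a - (a == a1)%:R / s%:R + (a == a2)%:R / s%:R.

Lemma mem_fl Q i y : tnth y i = a2 ->
  (fl i y \in type_class s Q) = (y \in type_class s (shift1 Q)).
Proof.
move=> hy; rewrite !inE; apply: eq_forallb => a.
rewrite /emp_dist !countE /shift1.
have e : cntR (fl i y) a = cntR y a + (a == a1)%:R - (a == a2)%:R.
  by rewrite -(@cnt_fl i y a hy); ring.
rewrite e; apply/eqP/eqP => H.
  rewrite -H; ring.
have -> : Q a = cntR y a / s%:R + (a == a1)%:R / s%:R - (a == a2)%:R / s%:R.
  by rewrite H; ring.
ring.
Qed.

Lemma cnt_tc Q x a : x \in type_class s Q -> cntR x a = s%:R * Q a.
Proof.
rewrite inE => /forallP /(_ a) /eqP; rewrite /emp_dist countE => <-.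
rewrite mulrC divfK // pnatr_eq0 -lt0n //.
Qed.

Lemma sum_split (x : s.-tuple A) a (c : R) :
  wt x * cntR x a * c = \sum_(j < s) wt x * (tnth x j == a)%:R * c.
Proof. by rewrite /cntR mulr_sumr mulr_suml. Qed.

Lemma step Q :
  prodP P (type_class s Q) * (s%:R * Q a1) * P a2 =
  prodP P (type_class s (shift1 Q)) * (s%:R * shift1 Q a2) * P a1.
Proof.
rewrite /prodP !mulr_suml.
rewrite (eq_bigr (fun x => \sum_(j < s) wt x * (tnth x j == a1)%:R * P a2)); last first.
  by move=> x hx; rewrite -sum_split (@cnt_tc Q x a1 hx).
rewrite [RHS](eq_bigr (fun x => \sum_(j < s) wt x * (tnth x j == a2)%:R * P a1)); last first.
  by move=> x hx; rewrite -sum_split (@cnt_tc (shift1 Q) x a2 hx).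
rewrite exchange_big [RHS]exchange_big /=; apply: eq_bigr => i _.
rewrite (reindex_inj (can_inj (fl_inv i))) /=.
rewrite big_mkcond [RHS]big_mkcond; apply: eq_bigr => y _.
case: (eqVneq (tnth y i) a2) => hy.
  rewrite (@mem_fl Q i y hy) tnth_fl eqxx sw_a1 hy eqxx; case: ifP => // _.
  by rewrite !mulr1 (@wt_fl i y hy).
rewrite tnth_fl eqxx sw_a1 (negbTE hy) !mulr0 !mul0r.
by case: ifP; case: ifP.
Qed.


Lemma shift3 Q : type_class s (shift1 (shift1 (shift1 Q))) = type_class s (shift_type s a1 a2 Q).
Proof.
apply/setP=> x; rewrite !inE; apply: eq_forallb => a; congr (_ == _).
rewrite /shift1 /shift_type; case: (eqVneq a a1) => [->|h1].
  rewrite (negbTE a12) /=; ring.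
case: (eqVneq a a2) => [->|h2] /=; first ring.
ring.
Qed.

Lemma sh1 Q : s%:R * shift1 Q a1 = s%:R * Q a1 - 1.
Proof.
have sn : s%:R != 0 :> R by rewrite pnatr_eq0 -lt0n.
rewrite /shift1 eqxx (negbTE a12) /=; by field.
Qed.

Lemma sh2 Q : s%:R * shift1 Q a2 = s%:R * Q a2 + 1.
Proof.
have sn : s%:R != 0 :> R by rewrite pnatr_eq0 -lt0n.
rewrite /shift1 eqxx eq_sym (negbTE a12) /=; by field.
Qed.

End S.

Lemma W_ge0 (R : realType) (A : finType) (s : nat) (P : A -> R) (E : {set s.-tuple A}) :
  (forall a, 0 <= P a) -> 0 <= prodP P E.
Proof. by move=> h; apply: sumr_ge0 => x _; apply: prodr_ge0 => i _. Qed.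

Lemma ineq_aux (R : realType) (W W' x y P1 P2 t : R) : 0<=W -> 0 < y*P1 -> W*x*P2 = W'*y*P1 -> t*y*P1 <= x*P2 -> t * W <= W'.
Proof. move=> h0 h1 e h2.
rewrite -(ler_pM2r h1).
have : W * (t*y*P1) <= W*(x*P2) by rewrite ler_wpM2l.
have -> : W' * (y*P1) = W*x*P2 by rewrite e; ring.
have -> : t*W*(y*P1) = W*(t*y*P1) by ring.
by have -> : W*x*P2 = W*(x*P2) by ring.
Qed.
Lemma bound_aux (R : realType) (d n1 n2 P1 P2 k : R) : 0 < d < 1 -> 1 <= n2 -> 3 < n1 -> 0 < P1 -> 0 < P2 ->
  d^+2 * n2 * P1 <= n1 * P2 -> 0 <= k <= 2 -> d^+2/12 * (n2 + k + 1) * P1 <= (n1 - k) * P2.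
Proof. move=> /andP[d0 d1] h2 h1 p1 p2 key /andP[k0 k2].
have a : d^+2/12 * (n2 + k + 1) * P1 <= d^+2/12 * (4 * n2) * P1.
  rewrite ler_pM2r // ler_pM2l; [lra| ]. apply: divr_gt0 => //. by rewrite exprn_gt0.
apply: (le_trans a).
have b : n1 / 3 * P2 <= (n1 - k) * P2 by rewrite ler_pM2r //; lra.
apply: le_trans b. lra.
Qed.


Arguments shift3 {R A s a1 a2}.
Arguments sh1 {R A s a1 a2}.
Arguments sh2 {R A s a1 a2}.
Arguments step {R A s a1 a2}.
Arguments W_ge0 {R A s P}.
Arguments ineq_aux {R W W' x y P1 P2 t}.
Arguments bound_aux {R d n1 n2 P1 P2 k}.
Theorem lemma1 (R : realType) (delta0 : R) :
  0 < delta0 < 1 ->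
  exists delta : R, 0 < delta /\
  forall (A : finType) (a1 a2 : A) (P : A -> R) (s : nat) (Phat : A -> R),
    a1 != a2 ->
    is_distr P ->
    (1 <= s)%N ->
    3%:R / (s%:R * delta0) < Num.min (P a1) (P a2) ->
    empirical_type s Phat ->
    delta0 <= Num.min (Phat a1 / P a1) (P a2 / Phat a2) ->
    1 / s%:R <= Phat a2 ->
    delta * prodP P (type_class s Phat)
      <= prodP P (type_class s (shift_type s a1 a2 Phat)).
Proof.
move=> hd; have /andP[d0 d1] := hd.
have t0 : 0 < delta0 ^+ 2 / 12 by rewrite divr_gt0 // exprn_gt0.
exists ((delta0^+2/12)^+3); split; first by rewrite exprn_gt0.
move=> A a1 a2 P s Phat a12 [P0 _] s0 Hmin _ Hd Hp2.
have sR : 0 < s%:R :> R by rewrite ltr0n.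
have H3 : 0 < 3%:R / (s%:R * delta0) :> R by rewrite divr_gt0 // mulr_gt0.
move: Hmin; rewrite lt_min => /andP[hA1 hA2].
move: Hd; rewrite le_min => /andP[hd1 hd2].
have p1 : 0 < P a1 by apply: lt_trans hA1.
have p2 : 0 < P a2 by apply: lt_trans hA2.
have ph2 : 0 < Phat a2 by apply: lt_le_trans Hp2; rewrite divr_gt0.
rewrite ler_pdivlMr // in hd1; rewrite ler_pdivlMr // in hd2.
rewrite ler_pdivrMr // in Hp2.
rewrite ltr_pdivrMr ?mulr_gt0 // in hA1.
have n2ge : 1 <= s%:R * Phat a2 by rewrite mulrC.
have n1gt : 3 < s%:R * Phat a1.
  apply: (lt_le_trans hA1).
  have -> : P a1 * (s%:R * delta0) = s%:R * (delta0 * P a1) by ring.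
  by rewrite ler_pM2l.
have key : delta0^+2 * (s%:R * Phat a2) * P a1 <= (s%:R * Phat a1) * P a2.
  have k1 : (delta0 * P a1) * (delta0 * Phat a2) <= Phat a1 * P a2.
    apply: ler_pM => //; rewrite mulr_ge0 // ltW //.
  have -> : delta0 ^+ 2 * (s%:R * Phat a2) * P a1 = s%:R * ((delta0 * P a1) * (delta0 * Phat a2)) by ring.
  have -> : s%:R * Phat a1 * P a2 = s%:R * (Phat a1 * P a2) by ring.
  by rewrite ler_pM2l.
set t := delta0 ^+ 2 / 12.
set Q1 := shift1 R A s a1 a2 Phat.
set Q2 := shift1 R A s a1 a2 Q1.
set Q3 := shift1 R A s a1 a2 Q2.
rewrite -(shift3 a12 Phat).
have st1 := step P a12 s0 Phat. have st2 := step P a12 s0 Q1.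
have st3 := step P a12 s0 Q2.
rewrite -/Q1 -/Q2 in st1 st2 st3; rewrite -/Q3 in st3.
have W0 := W_ge0 (type_class s Phat) P0.
have W1 := W_ge0 (type_class s Q1) P0.
have W2 := W_ge0 (type_class s Q2) P0.
have W3 := W_ge0 (type_class s Q3) P0.
set n1 := s%:R * Phat a1 in n1gt key st1.
set n2 := s%:R * Phat a2 in n2ge key.
have e11 : s%:R * Q1 a1 = n1 - 1 by rewrite (sh1 a12 s0).
have e12 : s%:R * Q1 a2 = n2 + 1 by rewrite (sh2 a12 s0).
have e21 : s%:R * Q2 a1 = n1 - 2 by rewrite (sh1 a12 s0) e11; ring.
have e22 : s%:R * Q2 a2 = n2 + 2 by rewrite (sh2 a12 s0) e12; ring.
have e32 : s%:R * Q3 a2 = n2 + 3 by rewrite (sh2 a12 s0) e22; ring.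
rewrite e12 in st1; rewrite e11 e22 in st2; rewrite e21 e32 in st3.
have nP : forall k : R, 0 <= k -> 0 < (n2 + k) * P a1.
  by move=> k k0; rewrite mulr_gt0 //; lra.
have i1 : t * prodP P (type_class s Phat) <= prodP P (type_class s Q1).
  apply: (ineq_aux W0 (nP 1 ler01) st1).
  have := @bound_aux R delta0 n1 n2 (P a1) (P a2) 0 hd n2ge n1gt p1 p2 key; rewrite subr0 addr0; apply; apply/andP; split; lra.
have i2 : t * prodP P (type_class s Q1) <= prodP P (type_class s Q2).
  apply: (ineq_aux W1 (nP 2 ltac:(lra)) st2).
  have := @bound_aux R delta0 n1 n2 (P a1) (P a2) 1 hd n2ge n1gt p1 p2 key; rewrite -addrA; apply; apply/andP; split; lra.
have i3 : t * prodP P (type_class s Q2) <= prodP P (type_class s Q3).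
  apply: (ineq_aux W2 (nP 3 ltac:(lra)) st3).
  have := @bound_aux R delta0 n1 n2 (P a1) (P a2) 2 hd n2ge n1gt p1 p2 key.
  have -> : n2 + 2 + 1 = n2 + 3 by ring.
  apply; apply/andP; split; lra.
have tge : 0 <= t by apply: ltW.
have -> : t ^+ 3 * prodP P (type_class s Phat) = t * (t * (t * prodP P (type_class s Phat))) by ring.
apply: (le_trans _ i3); rewrite ler_wpM2l //.
apply: (le_trans _ i2); rewrite ler_wpM2l //.
Qed.
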